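(* If $G$ is a connected locally Dirac graph of order at least $4$, then $G$ is $3$-connected.
   Context: A graph $G$ is locally Dirac if for every vertex $v \in V(G)$ and every $u \in N(v)$, $\deg_{\langle N(v)\rangle}(u) \ge \deg_G(v)/2$, where $N(v)$ is the open neighbourhood of $v$ and $\langle N(v)\rangle$ the subgraph induced by it. *)

(* Defs.v *)
From mathcomp Require Import all_boot.
Set Implicit Arguments. Unset Strict Implicit. Unset Printing Implicit Defensive.

Definition simple_graph (T : finType) (e : rel T) : Prop :=
  symmetric e /\ irreflexive e.

Definition nbhd (T : finType) (e : rel T) (v : T) : {set T} := [set u | e v u].

Definition deg (T : finType) (e : rel T) (v : T) : nat := #|nbhd e v|.

Definition deg_in_nbhd (T : finType) (e : rel T) (v u : T) : nat :=
  #|[set w in nbhd e v | e u w]|.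

(* locally Dirac: for all v and u in N(v), deg_<N(v)>(u) >= deg_G(v)/2
   (stated without division: 2 * deg_<N(v)>(u) >= deg_G(v)) *)
Definition locally_dirac (T : finType) (e : rel T) : Prop :=
  forall v u : T, u \in nbhd e v -> deg e v <= 2 * deg_in_nbhd e v u.

Definition connected (T : finType) (e : rel T) : Prop :=
  forall x y : T, connect e x y.

Definition connected_without (T : finType) (e : rel T) (S : {set T}) : Prop :=
  forall x y : T, x \notin S -> y \notin S ->
    connect [rel a b | e a b && (a \notin S) && (b \notin S)] x y.

Definition k_connected (k : nat) (T : finType) (e : rel T) : Prop :=
  k < #|T| /\ forall S : {set T}, #|S| < k -> connected_without e S.

(* Main.v *)
Require Import Defs.
From mathcomp Require Import all_boot.
From mathcomp Require Import zify.

Set Implicit Arguments. Unset Strict Implicit. Unset Printing Implicit Defensive.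

Lemma loc (T : finType) (e : rel T) (S : {set T}) s a b :
  simple_graph e -> locally_dirac e -> #|S| < 3 -> s \in S ->
  e s a -> e s b -> a \notin S -> b \notin S ->
  connect [rel x y | e x y && (x \notin S) && (y \notin S)] a b.
Proof.
move=> [sym irr] ld hS sS esa esb aS bS.
case: (eqVneq a b) => [-> | nab]; first exact: connect0.
case eab: (e a b).
  by apply: connect1; rewrite /= eab aS bS.
set NA := [set w in nbhd e s | e a w].
set NB := [set w in nbhd e s | e b w].
have hA : deg e s <= 2 * #|NA| by apply: ld; rewrite inE.
have hB : deg e s <= 2 * #|NB| by apply: ld; rewrite inE.
have sub : NA :|: NB \subset (nbhd e s :\ a :\ b).
  apply/subsetP => w; rewrite !inE => /orP [] /andP [esw ew].
    rewrite esw andbT; apply/andP; split.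
      by apply/eqP => ewb; move: ew; rewrite ewb eab.
    by apply/eqP => ewa; move: ew; rewrite ewa irr.
  rewrite esw andbT; apply/andP; split.
    by apply/eqP => ewb; move: ew; rewrite ewb irr.
  by apply/eqP => ewa; move: ew; rewrite ewa sym eab.
have cD : #|nbhd e s :\ a :\ b| + 2 = deg e s.
  have := cardsD1 a (nbhd e s); have := cardsD1 b (nbhd e s :\ a).
  rewrite /deg !inE esa esb eq_sym nab /=. lia.
have cU := cardsUI NA NB.
have sc := subset_leq_card sub.
set I := NA :&: NB.
have sIS : I :&: S \subset S :\ s.
  apply/subsetP => w; rewrite !inE => /andP [/andP [/andP [esw _] _] wS].
  by rewrite wS andbT; apply/eqP => ews; move: esw; rewrite ews irr.
have c1 := cardsD1 s S; rewrite sS in c1.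
have c2 := subset_leq_card sIS.
have c3 := cardsID S I.
have : 0 < #|I :\: S|.
rewrite /I in c2 c3 cU *. rewrite /= in c1. lia.
case/card_gt0P => c; rewrite !inE => /andP [cS /andP [/andP [_ eac] /andP [_ ebc]]].
apply: (@connect_trans _ _ c); apply: connect1; rewrite /=.
  by rewrite eac aS cS.
by rewrite sym ebc bS cS.
Qed.

Theorem mainTheorem5 (T : finType) (e : rel T) :
  simple_graph e -> connected e -> locally_dirac e -> 4 <= #|T| ->
  k_connected 3 e.
Proof.
move=> sg con ld h4; split; first by [].
move=> S hS x y xS yS.
have [sym irr] := sg.
set R := [rel a b | e a b && (a \notin S) && (b \notin S)].
pose A := [set w | ((w \notin S) && connect R x w) ||
                   ((w \in S) && [exists a, [&& e w a, a \notin S & connect R x a]])].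
have clo : forall u w, e u w -> u \in A -> w \in A.
  move=> u w euw; rewrite !inE.
  case/orP => [/andP [uS cu] | /andP [uS /existsP [a /and3P [eua aS ca]]]].
    case wS: (w \in S) => /=.
      by apply/existsP; exists u; rewrite sym euw uS cu.
    rewrite orbF. by apply: (connect_trans cu); apply: connect1; rewrite /= euw uS wS.
  case wS: (w \in S) => /=.
    have nuw : u != w by apply/eqP => E; move: euw; rewrite E irr.
    have hd : deg e w <= 2 * deg_in_nbhd e w u by apply: ld; rewrite inE sym.
    have d1 : 0 < deg e w by apply/card_gt0P; exists u; rewrite inE sym.
    have : 0 < deg_in_nbhd e w u by lia.
    case/card_gt0P => c; rewrite !inE => /andP [ewc euc].
    have cS : c \notin S.
      apply/negP => cS.
      have cu : c != u by apply/eqP => E; move: euc; rewrite E irr.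
      have cw : c != w by apply/eqP => E; move: ewc; rewrite E irr.
      have sub : c |: [set u; w] \subset S.
        by apply/subsetP => z; rewrite !inE; case/orP => [ | /orP []] /eqP ->.
      have h3 : #|c |: [set u; w]| = 3.
        by rewrite cardsU1 cards2 !inE nuw negb_or cu cw.
      have := subset_leq_card sub. rewrite h3. move=> H. clear -H hS. lia.
    apply/existsP; exists c; rewrite ewc cS /=.
    by apply: (connect_trans ca); apply: (loc sg ld hS uS eua euc aS cS).
  rewrite orbF. by apply: (connect_trans ca); apply: (loc sg ld hS uS eua euw aS); rewrite wS.
have xA : x \in A by rewrite inE xS connect0.
have yA : y \in A.
  case/connectP: (con x y) => p.
  move: (x) xA; elim: p => [|z p IH] x0 x0A /=; first by move=> _ ->.
  by case/andP => ez pp ly; apply: (IH z (clo _ _ ez x0A) pp ly).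
move: yA; rewrite inE yS /=. by rewrite (negbTE yS) andFb orbF.
Qed.
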